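(* Let $c\in Z^{10}$ with $\sum_i c_i=0$, $t\nmid C_i$ for all odd $i$, $t\mid C_3+C_5$, and $t\nmid C_i+C_{i+2}$ for all odd $i\neq 3$ (indices mod $10$). Then there exists $\beta\in\mathbb{C}\setminus\{0,-1,-2\}$ such that $\mathbb{M}(c)\cong\mathbb{M}_\beta$ as $B_{5,10}$-modules.
   Context: Let $Z=\mathbb{C}[[t]]$. Let $\Gamma_{10}$ be the quiver with vertices $0,1,\dots,9$ (indices taken mod $10$) on a cycle and arrows $x_i\colon i-1\to i$, $y_i\colon i\to i-1$ for $i=1,\dots,10$. Let $B_{5,10}$ be the completed path algebra of $\Gamma_{10}$ modulo the closed ideal generated by $xy=yx$ and $x^5=y^5$ at every vertex. For $b=(b_1,\dots,b_{10})\in Z^{10}$ with $\sum_i b_i=0$, the $B_{5,10}$-module $\mathbb{M}(b)$ has $V_i=Z\oplus Z$ at every vertex, and for odd $j$: $x_j=\begin{pmatrix} t& b_j\\ 0&1\end{pmatrix}$, $y_j=\begin{pmatrix} 1&-b_j\\0&t\end{pmatrix}$; for even $j$: $x_j=\begin{pmatrix}1&b_j\\0&t\end{pmatrix}$, $y_j=\begin{pmatrix}t&-b_j\\0&1\end{pmatrix}$. An isomorphism $\mathbb{M}(b)\to\mathbb{M}(c)$ is a family of invertible $Z$-linear maps $\varphi_i\colon Z^2\to Z^2$ commuting with all $x_i$ and $y_i$. For odd $i$ write $B_i=b_i+b_{i+1}$ and $C_i=c_i+c_{i+1}$ (indices mod $10$). For $\beta\in\mathbb{C}\setminus\{0,-1,-2\}$,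 $\mathbb{M}_\beta$ denotes $\mathbb{M}(b)$ for a tuple $b$ with $B_1=\beta$, $B_3=1$, $B_5=-1$, $B_7=-\beta-1$, $B_9=1$ (e.g. $b_i=B_i$ for odd $i$ and $b_i=0$ for even $i$). *)

(* Defs.v *)
(* complex numbers are R[i] = complex R for R : realType
   (i.e. the field C, since any realType is the real line). *)
From HB Require Import structures.
From mathcomp Require Import all_boot all_order all_algebra.
From mathcomp Require Import reals complex.
Set Implicit Arguments. Unset Strict Implicit. Unset Printing Implicit Defensive.
Import Order.TTheory GRing.Theory Num.Theory.
Local Open Scope ring_scope.
Local Open Scope complex_scope.

Section PS.
Variable R : realType.
Notation C := (R[i]).

(* Z = C[[t]] : formal power series, a series is its coefficient sequence *)
Definition ps := nat -> C.
Definition pconst (a : C) : ps := fun n => if n == 0%N then a else 0.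
Definition pt : ps := fun n => if n == 1%N then 1 else 0.
Definition padd (f g : ps) : ps := fun n => f n + g n.
Definition popp (f : ps) : ps := fun n => - f n.
Definition pmul (f g : ps) : ps := fun n => \sum_(k < n.+1) f k * g (n - k)%N.
Definition tdvd (f : ps) : Prop := exists g : ps, f = pmul pt g.

(* Z-linear endomorphisms of Z^2 = 2x2 matrices over Z (acting on columns) *)
Definition mat := 'I_2 -> 'I_2 -> ps.
Definition mk (a b c d : ps) : mat := fun i j =>
  if (i : nat) == 0%N then (if (j : nat) == 0%N then a else b)
  else (if (j : nat) == 0%N then c else d).
Definition mmul (A B : mat) : mat :=
  fun i j n => \sum_(k < 2) pmul (A i k) (B k j) n.
Definition meq (A B : mat) : Prop := forall i j n, A i j n = B i j n.
Definition mid : mat := mk (pconst 1) (pconst 0) (pconst 0) (pconst 1).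
Definition minvertible (A : mat) : Prop :=
  exists B : mat, meq (mmul A B) mid /\ meq (mmul B A) mid.

(* tuples (b_1, ..., b_10) are stored as b : 'I_10 -> ps with b_10 stored at 0;
   paper index k (taken mod 10) *)
Definition at10 (b : 'I_10 -> ps) (k : nat) : ps := b (inord (k %% 10)).
Definition vtx (k : nat) : 'I_10 := inord (k %% 10).

Definition sum_zero (b : 'I_10 -> ps) : Prop :=
  forall n, \sum_(i < 10) b i n = 0.

Definition xmat (b : 'I_10 -> ps) (j : nat) : mat :=
  if odd j then mk pt (at10 b j) (pconst 0) (pconst 1)
  else mk (pconst 1) (at10 b j) (pconst 0) pt.
Definition ymat (b : 'I_10 -> ps) (j : nat) : mat :=
  if odd j then mk (pconst 1) (popp (at10 b j)) (pconst 0) pt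
  else mk pt (popp (at10 b j)) (pconst 0) (pconst 1).

(* isomorphism M(b) -> M(c) of representations of Gamma_10:
   phi_v invertible at each vertex v, and for each j = 1..10
   (x_j : j-1 -> j, y_j : j -> j-1)
   phi_j x_j^b = x_j^c phi_{j-1},  phi_{j-1} y_j^b = y_j^c phi_j *)
Definition Miso (b c : 'I_10 -> ps) : Prop :=
  exists phi : 'I_10 -> mat,
    (forall v, minvertible (phi v)) /\
    (forall j : nat, (1 <= j <= 10)%N ->
       meq (mmul (phi (vtx j)) (xmat b j)) (mmul (xmat c j) (phi (vtx j.-1))) /\
       meq (mmul (phi (vtx j.-1)) (ymat b j)) (mmul (ymat c j) (phi (vtx j)))).

Definition Csum (c : 'I_10 -> ps) (i : nat) : ps := padd (at10 c i) (at10 c i.+1).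

Definition bbeta (beta : C) : 'I_10 -> ps := fun k =>
  pconst (match (k : nat) return C with
          | 1%N => beta | 3%N => 1 | 5%N => -1 | 7%N => - beta - 1 | 9%N => 1
          | _ => 0 end).

End PS.

(* Main.v *)
Require Import Defs.
From HB Require Import structures.
From mathcomp Require Import all_boot all_order all_algebra.
From mathcomp Require Import reals complex.
From mathcomp Require Import ring.
From Stdlib Require Import FunctionalExtensionality Ring_theory.
Import Order.TTheory GRing.Theory Num.Theory.
Local Open Scope ring_scope.




Ltac mring := ring.

Section PSA.
Variable R : realType.
Local Notation C := (R[i]).
Local Notation ps := (ps R).

Definition T (n : nat) (f : ps) : {poly C} := \poly_(i < n.+1) f i.
Lemma coefT n f i : (i <= n)%N -> (T n f)`_i = f i.
Proof. by move=> h; rewrite coef_poly ltnS h. Qed.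

Lemma pmul_coef (f g : ps) (p q : {poly C}) n :
  (forall i, (i <= n)%N -> p`_i = f i) -> (forall i, (i <= n)%N -> q`_i = g i) ->
  pmul f g n = (p * q)`_n.
Proof.
move=> hp hq; rewrite coefM /pmul; apply: eq_bigr => j _.
by rewrite hp ?hq // ?leq_subr // -ltnS.
Qed.

Lemma pmulC (f g : ps) : pmul f g = pmul g f.
Proof.
apply: functional_extensionality => n.
rewrite (pmul_coef f g (T n f) (T n g) n) ?(pmul_coef g f (T n g) (T n f) n) 1?mulrC // => i hi; exact: coefT.
Qed.

Lemma pmulA (f g h : ps) : pmul f (pmul g h) = pmul (pmul f g) h.
Proof.
apply: functional_extensionality => n.
have H1 : forall i, (i <= n)%N -> (T n g * T n h)`_i = pmul g h i.
  move=> i hi; symmetry; apply: pmul_coef => k hk; apply: coefT; exact: leq_trans hk hi.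
have H2 : forall i, (i <= n)%N -> (T n f * T n g)`_i = pmul f g i.
  move=> i hi; symmetry; apply: pmul_coef => k hk; apply: coefT; exact: leq_trans hk hi.
rewrite (pmul_coef f (pmul g h) (T n f) (T n g * T n h) n) //; last exact: coefT.
rewrite (pmul_coef (pmul f g) h (T n f * T n g) (T n h) n) ?mulrA //; exact: coefT.
Qed.

Lemma pmul1 (f : ps) : pmul (pconst 1) f = f.
Proof.
apply: functional_extensionality => n.
rewrite (pmul_coef (pconst 1) f 1 (T n f) n) ?mul1r ?coefT // => i hi.
  by rewrite coef1 /pconst; case: (i == 0)%N.
exact: coefT.
Qed.

Lemma pmulDl (f g h : ps) : pmul (padd f g) h = padd (pmul f h) (pmul g h).
Proof.
apply: functional_extensionality => n.
by rewrite /pmul /padd -big_split /=; apply: eq_bigr => i _; rewrite mulrDl.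
Qed.

Definition psub (f g : ps) : ps := padd f (popp g).

Lemma ps_ring : ring_theory (pconst 0) (pconst 1) (@padd R) (@pmul R) psub (@popp R) (@eq ps).
Proof.
constructor.
- move=> f; apply: functional_extensionality => n; rewrite /padd /pconst.
  by case: (n == 0)%N; rewrite add0r.
- move=> f g; apply: functional_extensionality => n; by rewrite /padd addrC.
- move=> f g h; apply: functional_extensionality => n; by rewrite /padd addrA.
- exact: pmul1.
- exact: pmulC.
- exact: pmulA.
- exact: pmulDl.
- by [].
- move=> f; apply: functional_extensionality => n; rewrite /padd /popp /pconst.
  by case: (n == 0)%N; rewrite subrr.
Qed.

Lemma pconstM (x y : C) : pmul (pconst x) (pconst y) = pconst (x * y).
Proof.
apply: functional_extensionality => n.
rewrite (pmul_coef _ _ x%:P y%:P n) => [|i _|i _]; try by rewrite coefC.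
by rewrite -polyCM coefC.
Qed.

Lemma pmul_pt (f : ps) n : pmul (pt R) f n = if n is m.+1 then f m else 0.
Proof.
rewrite pmulC (pmul_coef f (pt R) (T n f) 'X n) => [|i hi|i _]; last 2 first.
- exact: coefT.
- by rewrite coefX /pt; case: (i == 1)%N.
rewrite coefMX; case: n => [|m] //=; rewrite coefT //.
Qed.

Lemma pt_cancel (f g : ps) : pmul (pt R) f = pmul (pt R) g -> f = g.
Proof.
move=> h; apply: functional_extensionality => n.
by have := congr1 (fun F => F n.+1) h; rewrite /= !pmul_pt.
Qed.

Definition pdivt (f : ps) : ps := fun n => f n.+1.
Lemma pdivtK (f : ps) : f 0%N = 0 -> pmul (pt R) (pdivt f) = f.
Proof.
move=> h0; apply: functional_extensionality => n; rewrite pmul_pt.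
by case: n.
Qed.

Lemma padd0 (f g : ps) : padd f g 0%N = f 0%N + g 0%N. Proof. by []. Qed.
Lemma popp0 (f : ps) : popp f 0%N = - f 0%N. Proof. by []. Qed.
Lemma pconst0 (x : C) : pconst x 0%N = x. Proof. by []. Qed.
Lemma pmul0 (f g : ps) : pmul f g 0%N = f 0%N * g 0%N.
Proof. by rewrite /pmul big_ord1 subn0. Qed.
Lemma psub0 (f g : ps) : psub f g 0%N = f 0%N - g 0%N. Proof. by []. Qed.

Lemma at10E (c : 'I_10 -> ps) (i : 'I_10) : c i = at10 c i.
Proof. by rewrite /at10 modn_small // inord_val. Qed.

Lemma tdvd_0 (f : ps) : tdvd f -> f 0%N = 0.
Proof. by case=> g ->; rewrite pmul_pt. Qed.
Lemma ntdvd_0 (f : ps) : ~ tdvd f -> f 0%N != 0.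
Proof.
move=> h; apply/eqP => h0; apply: h; exists (pdivt f); by rewrite pdivtK.
Qed.

Ltac fld := field; repeat (apply/andP; split); try assumption.

Lemma scalar_lemma (u w v : C) :
  u != 0 -> w != 0 -> v != 0 -> u != w -> u != v -> w != v ->
  exists beta a r : C, [/\ beta != 0, beta != -1, beta != -2, a != 0 &
   [/\ a * u - beta - r * (u * beta) = 0,
       a * w - (beta + 1) - r * (w * (beta + 1)) = 0 &
       a * v - (-1) - r * (v * (-1)) = 0]].
Proof.
move=> hu hw hv huw huv hwv.
have [U hUd] : {U : C | U = u^-1 - v^-1} by exists (u^-1 - v^-1).
have [W hWd] : {W : C | W = w^-1 - v^-1} by exists (w^-1 - v^-1).
have hU : U != 0.
  apply: contraNneq huv => hU0; have : U * (u * v) = v - u by rewrite hUd; fld.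
  by rewrite hU0 mul0r => /eqP; rewrite eq_sym subr_eq0 eq_sym.
have hW : W != 0.
  apply: contraNneq hwv => hW0; have : W * (w * v) = v - w by rewrite hWd; fld.
  by rewrite hW0 mul0r => /eqP; rewrite eq_sym subr_eq0 eq_sym.
have hUW : U - W != 0.
  apply: contraNneq huw => h0; have : (U - W) * (u * w) = w - u by rewrite hUd hWd; fld.
  by rewrite h0 mul0r => /eqP; rewrite eq_sym subr_eq0 eq_sym.
have [rho hr2] : {rho : C | rho ^+ 2 = U / (U - W)} by exists (sqrtC (U / (U - W))); rewrite sqrtCK.
have hr1 : rho ^+ 2 != 1.
  rewrite hr2; apply: contraNneq hW => h1.
  have : U = U - W by rewrite -[RHS]mul1r -h1 mulfVK.
  by move/eqP; rewrite -subr_eq0 opprB addrC subrK => /eqP ->.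
have hr0 : rho != 0.
  apply: contraNneq hU => h0; move: hr2; rewrite h0 expr0n /= => /esym/eqP.
  by rewrite mulf_eq0 invr_eq0 (negbTE hUW) orbF.
have key : U - (U - W) * rho ^+ 2 = 0 by rewrite hr2 mulrC mulfVK // subrr.
exists (rho - 1), (U - (U - W) * rho), (- (U - (U - W) * rho) - v^-1).
split.
- apply: contraNneq hr1 => /eqP; rewrite subr_eq0 => /eqP ->; by rewrite expr1n.
- by rewrite subr_eq addNr.
- apply: contraNneq hr1 => /eqP; rewrite subr_eq => /eqP ->.
  apply/eqP; ring.
- apply/eqP => ha.
  have : (U - (U - W) * rho) * rho = U * (rho - 1).
    have e : (U - (U - W) * rho) * rho = U * (rho - 1) + (U - (U - W) * rho ^+ 2) by ring.
    by rewrite e key addr0.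
  rewrite ha mul0r => /esym/eqP; rewrite mulf_eq0 (negbTE hU) /= subr_eq0 => /eqP e1.
  by move: hr1; rewrite e1 expr1n eqxx.
split.
- have e : (U - (U - W) * rho) * u - (rho - 1) - (- (U - (U - W) * rho) - v^-1) * (u * (rho - 1))
          = u * (U - (U - W) * rho ^+ 2) by rewrite hUd; fld.
  by rewrite e key mulr0.
- have e : (U - (U - W) * rho) * w - (rho - 1 + 1) - (- (U - (U - W) * rho) - v^-1) * (w * (rho - 1 + 1))
          = w * (U - (U - W) * rho ^+ 2) by rewrite hUd hWd; fld.
  by rewrite e key mulr0.
- fld.
Qed.

End PSA.
Arguments psub {R}.
Arguments at10E {R}.
Arguments scalar_lemma {R u w v}.
Arguments ntdvd_0 {R f}.
Arguments tdvd_0 {R f}.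
Arguments pdivt {R}.
From Stdlib Require Import Ring.

Section PSB.
Variable R : realType.
Local Notation C := (R[i]).
Local Notation ps := (ps R).
Local Notation t := (pt R).
Add Ring psring : (ps_ring R).

Lemma mmul_mk (a b c d e f g h : ps) : mmul (mk a b c d) (mk e f g h) =
  mk (padd (pmul a e) (pmul b g)) (padd (pmul a f) (pmul b h))
     (padd (pmul c e) (pmul d g)) (padd (pmul c f) (pmul d h)).
Proof.
apply: functional_extensionality => i; apply: functional_extensionality => j.
apply: functional_extensionality => n.
rewrite /mmul !big_ord_recl big_ord0 addr0 /mk /=.
by case: i => [[|[|i]] hi] //=; case: j => [[|[|j]] hj].
Qed.

Lemma meq_mk (a b c d a' b' c' d' : ps) :
  a = a' -> b = b' -> c = c' -> d = d' -> meq (mk a b c d) (mk a' b' c' d').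
Proof. by move=> -> -> -> ->. Qed.

Lemma minv_mk (A B Cq D : ps) (a : C) : a != 0 ->
  psub (pmul A D) (pmul B Cq) = pconst a -> minvertible (mk A B Cq D).
Proof.
move=> ha hd.
have e : pmul (pconst a^-1) (pconst a) = pconst 1 by rewrite pconstM mulVf.
exists (mk (pmul (pconst a^-1) D) (pmul (pconst a^-1) (popp B))
           (pmul (pconst a^-1) (popp Cq)) (pmul (pconst a^-1) A)).
rewrite /mid !mmul_mk; split; apply: meq_mk; rewrite -?e -?hd; ring.
Qed.


Definition Hd (F G : ps -> ps -> ps -> ps -> ps -> ps) y0 y1 y2 y3 y4 :=
  psub (F y0 y1 y2 y3 y4) (G y0 y1 y2 y3 y4).

Lemma lin5 (F G : ps -> ps -> ps -> ps -> ps -> ps) x0 x1 x2 x3 x4 n0 n1 n2 n3 n4 :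
  pmul t x0 = n0 -> pmul t x1 = n1 -> pmul t x2 = n2 -> pmul t x3 = n3 -> pmul t x4 = n4 ->
  (forall y0 y1 y2 y3 y4, Hd F G y0 y1 y2 y3 y4 =
     padd (Hd F G (pconst 0) (pconst 0) (pconst 0) (pconst 0) (pconst 0))
     (padd (pmul (psub (Hd F G (pconst 1) (pconst 0) (pconst 0) (pconst 0) (pconst 0))
                       (Hd F G (pconst 0) (pconst 0) (pconst 0) (pconst 0) (pconst 0))) y0)
     (padd (pmul (psub (Hd F G (pconst 0) (pconst 1) (pconst 0) (pconst 0) (pconst 0))
                       (Hd F G (pconst 0) (pconst 0) (pconst 0) (pconst 0) (pconst 0))) y1)
     (padd (pmul (psub (Hd F G (pconst 0) (pconst 0) (pconst 1) (pconst 0) (pconst 0))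
                       (Hd F G (pconst 0) (pconst 0) (pconst 0) (pconst 0) (pconst 0))) y2)
     (padd (pmul (psub (Hd F G (pconst 0) (pconst 0) (pconst 0) (pconst 1) (pconst 0))
                       (Hd F G (pconst 0) (pconst 0) (pconst 0) (pconst 0) (pconst 0))) y3)
           (pmul (psub (Hd F G (pconst 0) (pconst 0) (pconst 0) (pconst 0) (pconst 1))
                       (Hd F G (pconst 0) (pconst 0) (pconst 0) (pconst 0) (pconst 0))) y4)))))) ->
  padd (pmul t (Hd F G (pconst 0) (pconst 0) (pconst 0) (pconst 0) (pconst 0)))
     (padd (pmul (psub (Hd F G (pconst 1) (pconst 0) (pconst 0) (pconst 0) (pconst 0))
                       (Hd F G (pconst 0) (pconst 0) (pconst 0) (pconst 0) (pconst 0))) n0)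
     (padd (pmul (psub (Hd F G (pconst 0) (pconst 1) (pconst 0) (pconst 0) (pconst 0))
                       (Hd F G (pconst 0) (pconst 0) (pconst 0) (pconst 0) (pconst 0))) n1)
     (padd (pmul (psub (Hd F G (pconst 0) (pconst 0) (pconst 1) (pconst 0) (pconst 0))
                       (Hd F G (pconst 0) (pconst 0) (pconst 0) (pconst 0) (pconst 0))) n2)
     (padd (pmul (psub (Hd F G (pconst 0) (pconst 0) (pconst 0) (pconst 1) (pconst 0))
                       (Hd F G (pconst 0) (pconst 0) (pconst 0) (pconst 0) (pconst 0))) n3)
           (pmul (psub (Hd F G (pconst 0) (pconst 0) (pconst 0) (pconst 0) (pconst 1))
                       (Hd F G (pconst 0) (pconst 0) (pconst 0) (pconst 0) (pconst 0))) n4))))) = pconst 0 ->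
  F x0 x1 x2 x3 x4 = G x0 x1 x2 x3 x4.
Proof.
move=> e0 e1 e2 e3 e4 haff hfin; subst n0 n1 n2 n3 n4.
have h : Hd F G x0 x1 x2 x3 x4 = pconst 0.
  apply: pt_cancel; rewrite haff.
  transitivity (pconst (R:=R) 0); last ring.
  apply: (eq_trans _ hfin); ring.
transitivity (padd (Hd F G x0 x1 x2 x3 x4) (G x0 x1 x2 x3 x4)).
  rewrite /Hd; ring.
rewrite h; ring.
Qed.

Fixpoint Sser_aux (x : 'I_10 -> ps) (k j : nat) : ps :=
  match k with 0%N => pconst 0
  | k'.+1 => padd (padd (at10 x j) (at10 x j.+1)) (Sser_aux x k' j.+2) end.
Definition Sser x k := Sser_aux x k 1.

Definition Nk (b c : 'I_10 -> ps) (a r : C) (k : nat) : ps :=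
  psub (psub (pmul (pconst a) (Sser c k)) (Sser b k))
       (pmul (pconst r) (pmul (Sser c k) (Sser b k))).

Definition phiE (b c : 'I_10 -> ps) (a r : C) (B : nat -> ps) (k : nat) : mat R :=
  mk (padd (pconst 1) (pmul (pconst r) (Sser c k))) (B k) (pmul t (pconst r))
     (psub (pconst a) (pmul (pconst r) (Sser b k))).

Definition phiO (b c : 'I_10 -> ps) (a r : C) (B : nat -> ps) (k j : nat) : mat R :=
  mk (padd (padd (pconst 1) (pmul (pconst r) (Sser c k))) (pmul (pconst r) (at10 c j)))
     (psub (padd (pmul t (B k)) (pmul (at10 c j) (psub (pconst a) (pmul (pconst r) (Sser b k)))))
           (pmul (at10 b j) (padd (padd (pconst 1) (pmul (pconst r) (Sser c k))) (pmul (pconst r) (at10 c j)))))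
     (pconst r)
     (psub (psub (pconst a) (pmul (pconst r) (Sser b k))) (pmul (pconst r) (at10 b j))).

Definition phiv b c a r B (v : nat) : mat R :=
  match v with
  | 1%N => phiO b c a r B 0 1 | 2%N => phiE b c a r B 1
  | 3%N => phiO b c a r B 1 3 | 4%N => phiE b c a r B 2
  | 5%N => phiO b c a r B 2 5 | 6%N => phiE b c a r B 3
  | 7%N => phiO b c a r B 3 7 | 8%N => phiE b c a r B 4
  | 9%N => phiO b c a r B 4 9 | _ => phiE b c a r B 0 end.

Definition sum9 (x : 'I_10 -> ps) : ps :=
  padd (at10 x 1) (padd (at10 x 2) (padd (at10 x 3) (padd (at10 x 4) (padd (at10 x 5)
  (padd (at10 x 6) (padd (at10 x 7) (padd (at10 x 8) (at10 x 9)))))))).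

Lemma vtxK j : (j < 10)%N -> nat_of_ord (vtx j) = j.
Proof. by move=> h; rewrite /vtx modn_small // inordK. Qed.
Lemma vtx10 : nat_of_ord (vtx 10) = 0%N.
Proof. by rewrite /vtx modnn inordK. Qed.

Ltac lin B H0 H1 H2 H3 H4 :=
  match goal with |- ?L = ?Rr =>
    let L' := eval pattern (B 0%N), (B 1%N), (B 2%N), (B 3%N), (B 4%N) in L in
    let R' := eval pattern (B 0%N), (B 1%N), (B 2%N), (B 3%N), (B 4%N) in Rr in
    match L' with ?F _ _ _ _ _ => match R' with ?G _ _ _ _ _ =>
      apply (lin5 F G _ _ _ _ _ _ _ _ _ _ H0 H1 H2 H3 H4);
        [intros; rewrite /Hd; cbv beta; ring | rewrite /Hd; cbv beta; ring] end end end.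

Lemma miso_gen (b c : 'I_10 -> ps) (a r : C) (B : nat -> ps) :
  a != 0 -> at10 b 10 = popp (sum9 b) -> at10 c 10 = popp (sum9 c) ->
  (forall k, (k < 5)%N -> pmul t (B k) = Nk b c a r k) -> Miso b c.
Proof.
move=> ha hb hc HB.
have H0 := HB 0%N isT; have H1 := HB 1%N isT; have H2 := HB 2%N isT.
have H3 := HB 3%N isT; have H4 := HB 4%N isT.
rewrite /Nk /Sser /= in H0 H1 H2 H3 H4.
exists (fun v : 'I_10 => phiv b c a r B v); split.
- case=> [[|[|[|[|[|[|[|[|[|[|v]]]]]]]]]] hv] //=;
    rewrite /phiE /phiO /Sser /=; refine (minv_mk _ _ _ _ a ha _); lin B H0 H1 H2 H3 H4.
- case=> [|[|[|[|[|[|[|[|[|[|[|j]]]]]]]]]]] //= _;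
  rewrite ?vtx10 !vtxK // /phiv /xmat /ymat /= /phiE /phiO /Sser /= ?hb ?hc /sum9 !mmul_mk;
  split; apply: meq_mk; lin B H0 H1 H2 H3 H4.
Qed.

End PSB.
Arguments sum9 {R}.
Arguments Sser {R}.
Arguments Nk {R}.
Arguments Sser_aux {R}.

Section PSC.
Variable R : realType.
Local Notation C := (R[i]).
Local Notation ps := (ps R).
Local Notation t := (pt R).

Lemma sumE (x : 'I_10 -> ps) n : \sum_(i < 10) x i n =
  at10 x 10 n + (at10 x 1 n + (at10 x 2 n + (at10 x 3 n + (at10 x 4 n + (at10 x 5 n +
  (at10 x 6 n + (at10 x 7 n + (at10 x 8 n + (at10 x 9 n + 0))))))))).
Proof.
rewrite (eq_bigr (fun i : 'I_10 => at10 x i n)) => [|i _]; last by rewrite -at10E.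
rewrite !big_ord_recl big_ord0; reflexivity.
Qed.

Lemma sumrel (x : 'I_10 -> ps) : sum_zero x -> at10 x 10 = popp (sum9 x).
Proof.
move=> hs; apply: functional_extensionality => n.
have h := hs n; rewrite sumE addr0 in h.
by apply/eqP; rewrite /popp /sum9 /padd -addr_eq0 h.
Qed.

Definition bval (beta : C) (k : nat) : C :=
  match k with 1%N => beta | 3%N => 1 | 5%N => -1 | 7%N => - beta - 1 | 9%N => 1 | _ => 0 end.

Lemma bbE beta k : (k < 10)%N -> at10 (bbeta beta) k = pconst (bval beta k).
Proof. by move=> h; rewrite /at10 /bbeta modn_small // inordK. Qed.

Lemma neq_of (x y d : C) : y - x = d -> d != 0 -> x != y.
Proof. move=> e hd; apply: contraNneq hd => exy; by rewrite -e exy subrr. Qed.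
Lemma nz_of (x d : C) : x = d -> d != 0 -> x != 0.
Proof. by move=> ->. Qed.

Lemma Nk0 (b c : 'I_10 -> ps) (a r : C) (k : nat) : Nk b c a r k 0%N =
  a * Sser c k 0%N - Sser b k 0%N - r * (Sser c k 0%N * Sser b k 0%N).
Proof. by rewrite /Nk !psub0 !pmul0 !pconst0. Qed.

Lemma main_sec (c : 'I_10 -> ps) :
  sum_zero c ->
  (forall i : nat, (i < 10)%N -> odd i -> ~ tdvd (Csum c i)) ->
  tdvd (padd (Csum c 3) (Csum c 5)) ->
  (forall i : nat, (i < 10)%N -> odd i -> i <> 3%N ->
     ~ tdvd (padd (Csum c i) (Csum c (i + 2)))) ->
  exists beta : C,
    [/\ beta != 0, beta != -1, beta != -2 & Miso (bbeta beta) c].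
Proof.
move=> hsum hC h35 hC2.
have hg1 := ntdvd_0 (hC 1%N isT isT).
have hg3 := ntdvd_0 (hC 3%N isT isT).
have hg7 := ntdvd_0 (hC 7%N isT isT).
have hg9 := ntdvd_0 (hC 9%N isT isT).
have hg13 := ntdvd_0 (hC2 1%N isT isT ltac:(discriminate)).
have hg57 := ntdvd_0 (hC2 5%N isT isT ltac:(discriminate)).
have h350 := tdvd_0 h35.
have htot := hsum 0%N; rewrite sumE addr0 in htot.
rewrite /Csum !padd0 in hg1 hg3 hg7 hg9 hg13 hg57 h350.
set c0 := at10 c 10 0%N in htot hg9.
set c1 := at10 c 1 0%N in htot hg1 hg13.
set c2 := at10 c 2 0%N in htot hg1 hg3 hg13.
set c3 := at10 c 3 0%N in htot hg3 hg13 h350.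
set c4 := at10 c 4 0%N in htot hg3 hg13 h350.
set c5 := at10 c 5 0%N in htot h350 hg57.
set c6 := at10 c 6 0%N in htot h350 hg57.
set c7 := at10 c 7 0%N in htot hg7 hg57.
set c8 := at10 c 8 0%N in htot hg7 hg57.
set c9 := at10 c 9 0%N in htot hg7 hg9.
have hu : c1 + c2 != 0 by [].
have hw : (c1 + c2) + (c3 + c4) != 0 by [].
have hv : (c1 + c2) + ((c3 + c4) + ((c5 + c6) + (c7 + c8))) != 0.
  apply: (@nz_of _ (- (c9 + c0))); last by rewrite oppr_eq0.
  apply/eqP; rewrite -subr_eq0 opprK -htot; apply/eqP; mring.
have huw : c1 + c2 != (c1 + c2) + (c3 + c4).
  by refine (neq_of _ _ (c3 + c4) _ hg3); mring.
have huv : c1 + c2 != (c1 + c2) + ((c3 + c4) + ((c5 + c6) + (c7 + c8))).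
  refine (neq_of _ _ (c7 + c8) _ hg7).
  transitivity ((c3 + c4) + (c5 + c6) + (c7 + c8)); first by mring.
  by rewrite h350 add0r.
have hwv : (c1 + c2) + (c3 + c4) != (c1 + c2) + ((c3 + c4) + ((c5 + c6) + (c7 + c8))).
  by refine (neq_of _ _ ((c5 + c6) + (c7 + c8)) _ hg57); mring.
have [beta [a [r [hb0 hb1 hb2 ha [e1 e2 e3]]]]] := scalar_lemma hu hw hv huw huv hwv.
exists beta; split => //.
refine (@miso_gen R (bbeta beta) c a r (fun k => pdivt (Nk (bbeta beta) c a r k)) ha _ _ _).
- apply: functional_extensionality => n.
  rewrite -[at10 _ 10]/(at10 (bbeta beta) 0) /sum9 !bbE // /popp /padd /pconst /bval.
  case: (n == 0)%N; apply/eqP; rewrite eq_sym -subr_eq0; apply/eqP; mring.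
- exact: sumrel.
move=> k hk; apply: pdivtK; rewrite Nk0 /Sser.
case: k hk => [|[|[|[|[|k]]]]] //= _; rewrite ?bbE // /padd /pconst /bval /=
  -/c1 -/c2 -/c3 -/c4 -/c5 -/c6 -/c7 -/c8.
- mring.
- rewrite -[RHS]e1; mring.
- rewrite -[RHS]e2; mring.
- transitivity (a * (c1 + c2) - beta - r * ((c1 + c2) * beta) +
     (a - r * beta) * ((c3 + c4) + (c5 + c6))); first by mring.
  by rewrite h350 mulr0 addr0 e1.
- rewrite -[RHS]e3; mring.
Qed.

End PSC.

Theorem proposition2p9 (R : realType) (c : 'I_10 -> ps R) :
  sum_zero c ->
  (forall i : nat, (i < 10)%N -> odd i -> ~ tdvd (Csum c i)) ->
  tdvd (padd (Csum c 3) (Csum c 5)) ->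
  (forall i : nat, (i < 10)%N -> odd i -> i <> 3%N ->
     ~ tdvd (padd (Csum c i) (Csum c (i + 2)))) ->
  exists beta : R[i],
    [/\ beta != 0, beta != -1, beta != -2 & Miso (bbeta beta) c].
Proof. exact: main_sec. Qed.
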